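(* Let $\mathbf{C}$ be a category all of whose morphisms are monomorphisms, enriched over $\mathbf{Top}$ with all homsets Hausdorff. Let $\mathbf{D}$ be a full subcategory of $\mathbf{C}$ which is a skeletal category of finite objects, and let $S \in \mathrm{Ob}(\mathbf{C})$ be universal for $\mathbf{D}$ and approximable in $\mathbf{D}$ via $F : \mathrm{Ob}(\mathbf{D}) \to \mathrm{Ob}(\mathbf{D})$ and $(\Phi_A)_{A \in \mathrm{Ob}(\mathbf{D})}$. Let $\mathfrak{G} = (G_A)_{A \in \mathrm{Ob}(\mathbf{C})}$ be a family of groups with $G_A \le \mathrm{Aut}_\mathbf{C}(A)$ for all $A$. Assume $\hom_\mathbf{C}(A,S)$ is locally compact second-countable Hausdorff for every $A \in \mathrm{Ob}(\mathbf{D})$. Then for every $A \in \mathrm{Ob}(\mathbf{D})$, $|G_A|$ and $|G_{F(A)}|$ are integers and $$t^\mathfrak{G}_\mathbf{D}(A) \le \frac{|G_{F(A)}|}{|G_A|}\cdot T^\mathfrak{G}_\mathbf{C}(F(A),S).$$ In particular, if $T^\mathfrak{G}_\mathbf{C}(A,S) < \infty$ for every $A \in \mathrm{Ob}(\mathbf{D})$, then $t^\mathfrak{G}_\mathbf{D}(A) < \infty$ for every $A \in \mathrm{Ob}(\mathbf{D})$.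
   Context: A category is enriched over $\mathbf{Top}$ if each homset is a topological space and composition is continuous. Skeletal: no two distinct objects are isomorphic. A category of finite objects is a locally small directed category whose morphisms are monomorphisms, whose skeleton has at most countably many objects, and in whose skeleton each object is the codomain of only finitely many morphisms. $S$ is universal for $\mathbf{D}$ if $\hom_\mathbf{C}(D,S)\ne\varnothing$ for all $D\in\mathrm{Ob}(\mathbf{D})$. $S$ is approximable in $\mathbf{D}$ via $F$ and $(\Phi_A)$ if each $\Phi_A:\hom_\mathbf{C}(F(A),S)\to\bigcup_{C\in\mathrm{Ob}(\mathbf{D})}\hom_\mathbf{D}(A,C)$ is Borel (preimages of open subsets of each $\hom_\mathbf{D}(A,C)$ are Borel) and for all $A,B\in\mathrm{Ob}(\mathbf{D})$, $f\in\hom_\mathbf{D}(A,B)$, $u\in\hom_\mathbf{C}(F(B),S)$ there is $f'\in\hom_\mathbf{D}(F(A),F(B))$ with $\Phi_A(u\cdot f')=\Phi_B(u)\cdot f$. $\mathrm{Aut}_\mathbf{C}(A)$ is the group of invertible morphisms $A\to A$. For $f,g\in\hom(A,X)$, $f\sim_\mathfrak{G}g$ iff $f=g\cdot\alpha$ for some $\alpha\in G_A$; $\binom{X}{A}_\mathfrak{G}=\hom(A,X)/{\sim_\mathfrak{G}}$ with the quotient topology; $w\cdot\binom{X}{A}_\mathfrak{G}=\{(w\cdot f)/{\sim_\mathfrak{G}}:f\in\hom(A,X)\}$. $t^\mathfrak{G}_\mathbf{D}(A)$ is the least positive integer $n$ such that for all $k\in\mathbb{N}$ and $B\in\mathrm{Ob}(\mathbf{D})$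 there is $C\in\mathrm{Ob}(\mathbf{D})$ such that every coloring $\chi:\binom{C}{A}_\mathfrak{G}\to\{0,\dots,k-1\}$ admits $w\in\hom(B,C)$ with $|\chi(w\cdot\binom{B}{A}_\mathfrak{G})|\le n$; $\infty$ if none. $T^\mathfrak{G}_\mathbf{C}(X,S)$ is the least positive integer $n$ such that for every $k\ge 2$ and every Borel coloring $\chi:\binom{S}{X}_\mathfrak{G}\to\{0,\dots,k-1\}$ (all fibers Borel) there is $w\in\hom(S,S)$ with $|\chi(w\cdot\binom{S}{X}_\mathfrak{G})|\le n$; $\infty$ if none. Arithmetic is in $\mathbb{N}_\infty=\{1,2,\dots,\infty\}$ with $n\cdot\infty=\infty$. *)

(* Defs.v *)
From HB Require Import structures.
From mathcomp Require Import all_boot all_order all_algebra generic_quotient.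
From mathcomp Require Import boolp classical_sets functions cardinality.
From mathcomp Require Import reals constructive_ereal ereal topology.
From mathcomp Require Import measurable_structure.

Set Implicit Arguments.
Unset Strict Implicit.
Unset Printing Implicit Defensive.

Import Order.TTheory GRing.Theory Num.Theory.
Local Open Scope classical_set_scope.

(* comp g f  stands for  g . f  (first f, then g).                      *)
Record TopCat := {
  Ob :> Type;
  hom : Ob -> Ob -> topologicalType;
  comp : forall A B D : Ob, hom B D -> hom A B -> hom A D;
  idm : forall A : Ob, hom A A;
  compA : forall (A B D E : Ob) (h : hom D E) (g : hom B D) (f : hom A B),
      comp h (comp g f) = comp (comp h g) f;
  comp1m : forall (A B : Ob) (f : hom A B), comp (idm B) f = f;
  compm1 : forall (A B : Ob) (f : hom A B), comp f (idm A) = f;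
  comp_continuous : forall A B D : Ob,
      continuous (fun p : hom B D * hom A B => comp p.1 p.2)
}.
Arguments comp {_ _ _ _} _ _.
Arguments idm {_} _.

Section Cat.
Variable C : TopCat.

Definition all_mono : Prop :=
  forall (A B D : C) (f : hom B D) (g h : hom A B), comp f g = comp f h -> g = h.

Definition is_iso (A B : C) (f : hom A B) : Prop :=
  exists g : hom B A, comp g f = idm A /\ comp f g = idm B.

(* A full subcategory D of C is given by the predicate inD on Ob(C);
   hom_D(A,B) = hom_C(A,B) for A, B in D. *)
Variable inD : C -> Prop.

Definition skeletal : Prop :=
  forall A B : C, inD A -> inD B -> (exists f : hom A B, is_iso f) -> A = B.

Definition directed : Prop :=
  forall A B : C, inD A -> inD B ->
    exists D : C, inD D /\ inhabited (hom A D) /\ inhabited (hom B D).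

(* D (being skeletal, it is its own skeleton) is a category of finite objects.
   Local smallness is automatic; monicity of morphisms comes from C. *)
Definition category_of_finite_objects : Prop :=
  directed /\
  (forall (A B D : C) (f : hom B D) (g h : hom A B),
      inD A -> inD B -> inD D -> comp f g = comp f h -> g = h) /\
  countable inD /\
  (forall B : C, inD B -> finite_set [set p : {A : C & hom A B} | inD (projT1 p)]).

Definition universal (S : C) : Prop :=
  forall A : C, inD A -> inhabited (hom A S).

Definition borel_set (T : topologicalType) (U : set T) : Prop :=
  <<s [set V : set T | open V] >> U.

(* S is approximable in D via F and (Phi_A)_A; Phi_A takes values in the
   disjoint union  \bigcup_{D in Ob(D)} hom_D(A, D). *)
Definition approximable (S : C) (F : C -> C)
    (Phi : forall A : C, hom (F A) S -> {B : C & hom A B}) : Prop :=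
  (forall A : C, inD A -> inD (F A)) /\
  (forall (A : C) (u : hom (F A) S), inD A -> inD (projT1 (Phi A u))) /\
  (forall A B : C, inD A -> inD B -> forall U : set (hom A B), open U ->
      borel_set [set u : hom (F A) S | exists2 f, U f & Phi A u = existT _ B f]) /\
  (forall (A B : C) (f : hom A B) (u : hom (F B) S), inD A -> inD B ->
      exists f' : hom (F A) (F B),
        Phi A (comp u f') = existT _ (projT1 (Phi B u)) (comp (projT2 (Phi B u)) f)).

End Cat.

Unset Implicit Arguments.
Record GroupFamily (C : TopCat) := {
  grp :> forall A : C, set (hom A A);
  grp_id : forall A : C, grp A (idm A);
  grp_comp : forall (A : C) (a b : hom A A), grp A a -> grp A b -> grp A (comp a b);
  grp_inv : forall (A : C) (a : hom A A), grp A a ->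
      exists2 b, grp A b & comp a b = idm A /\ comp b a = idm A
}.
Set Implicit Arguments.

Section Quot.
Local Open Scope quotient_scope.
Variables (C : TopCat) (G : GroupFamily C).

Definition simG_rel (A X : C) : rel (hom A X) :=
  fun f g => `[< exists2 a, G A a & f = comp g a >].

Lemma simG_refl A X : reflexive (@simG_rel A X).
Proof. move=> f; rewrite /simG_rel; apply/asboolP; exists (idm A); [exact: (grp_id C G) | by rewrite compm1]. Qed.

Lemma simG_sym1 A X (f g : hom A X) : @simG_rel A X f g -> @simG_rel A X g f.
Proof.
rewrite /simG_rel => /asboolP[a Ga ->]; apply/asboolP.
have [b Gb [ab ba]] := grp_inv C G A a Ga.
by exists b => //; rewrite -compA ab compm1.
Qed.

Lemma simG_sym A X : symmetric (@simG_rel A X).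
Proof. by move=> f g; apply/idP/idP => /simG_sym1. Qed.

Lemma simG_trans A X : transitive (@simG_rel A X).
Proof.
move=> g f h; rewrite /simG_rel => /asboolP[a Ga ->] /asboolP[b Gb ->]; apply/asboolP.
by exists (comp b a); [exact: (grp_comp C G) | rewrite compA].
Qed.

Definition simG (A X : C) : equiv_rel (hom A X) :=
  EquivRel (@simG_rel A X) (@simG_refl A X) (@simG_sym A X) (@simG_trans A X).

Definition binom (X A : C) : topologicalType :=
  quotient_topology {eq_quot (simG A X)}.

Definition cls (A X : C) (f : hom A X) : binom X A :=
  \pi_({eq_quot (simG A X)}) f.

End Quot.

Lemma exists_asbool (Q : nat -> Prop) : (exists n, Q n) -> exists n, `[< Q n >].
Proof. by case=> n h; exists n; apply/asboolP. Qed.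

Definition least (Q : nat -> Prop) : option nat :=
  match pselect (exists n, Q n) with
  | left h => Some (ex_minn (exists_asbool h))
  | right _ => None
  end.

(* elements of N_oo = {1,2,...,oo} embedded in the extended rationals *)
Definition to_ext (o : option nat) : \bar rat :=
  if o is Some n then ((n%:R : rat)%:E) else +oo%E.

(* cardinality of a finite set (only used for finite sets) *)
Definition set_card (T : Type) (X : set T) : nat :=
  odflt 0%N (least (fun n => (X #= `I_n)%card)).

Definition ncolors (C : TopCat) (G : GroupFamily C) (A B X : C) (k : nat)
    (chi : binom G X A -> 'I_k) (w : hom B X) : nat :=
  #|finset (fun i : 'I_k => `[< exists f : hom A B, chi (cls G (comp w f)) = i >])|.

Definition small_ramsey_deg (C : TopCat) (inD : C -> Prop) (G : GroupFamily C)
    (A : C) : \bar rat :=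
  to_ext (least (fun n => (0 < n)%N /\
    forall (k : nat) (B : C), inD B ->
      exists2 D : C, inD D &
        forall chi : binom G D A -> 'I_k,
          exists w : hom B D, (ncolors chi w <= n)%N)).

Definition big_ramsey_deg (C : TopCat) (G : GroupFamily C) (X S : C) : \bar rat :=
  to_ext (least (fun n => (0 < n)%N /\
    forall (k : nat), (2 <= k)%N ->
      forall chi : binom G S X -> 'I_k,
        (forall i : 'I_k, borel_set (chi @^-1` [set i])) ->
        exists w : hom S S, (ncolors chi w <= n)%N)).

Arguments approximable {C} inD S F Phi.
Arguments universal {C} inD S.
Arguments skeletal {C} inD.
Arguments category_of_finite_objects {C} inD.
Arguments small_ramsey_deg {C} inD G A.
Arguments big_ramsey_deg {C} G X S.

(* Main.v *)
Require Import Defs.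
From HB Require Import structures.
From mathcomp Require Import all_boot all_order ssralg ssrnum rat generic_quotient.
From mathcomp Require Import boolp classical_sets functions cardinality.
From mathcomp Require Import reals constructive_ereal ereal topology measurable_structure.
From Stdlib Require Eqdep.
Import Defs.
Local Open Scope classical_set_scope.

Section Borel.
Context {T : topologicalType}.
Local Notation B := (@borel_set T).

Lemma borel_open U : open U -> B U.
Proof. by move=> oU; apply: sub_sigma_algebra. Qed.

Lemma borel0 : B set0.
Proof. exact: sigma_algebra0. Qed.

Lemma borelC U : B U -> B (~` U).
Proof. by move=> bU; rewrite -setTD; exact: sigma_algebraCD. Qed.

Lemma borelT : B setT.
Proof. by rewrite -setC0; apply: borelC; exact: borel0. Qed.

Lemma borel_bigcup (F : nat -> set T) : (forall n, B (F n)) -> B (\bigcup_n F n).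
Proof. exact: sigma_algebra_bigcup. Qed.

Lemma borelU U V : B U -> B V -> B (U `|` V).
Proof.
move=> bU bV; rewrite (_ : U `|` V = \bigcup_n (if n is 0 then U else V)).
  by apply: borel_bigcup => -[|n].
apply/seteqP; split=> x.
  by case=> h; [exists 0%N | exists 1%N].
by case=> -[|n] _ h; [left|right].
Qed.

Lemma borelI U V : B U -> B V -> B (U `&` V).
Proof.
move=> bU bV; rewrite -[U `&` V]setCK setCI; apply: borelC.
by apply: borelU; apply: borelC.
Qed.

Lemma borelD U V : B U -> B V -> B (U `\` V).
Proof. by move=> bU bV; rewrite setDE; apply: borelI => //; exact: borelC. Qed.

Lemma borel_bigcup_countable (I : Type) (P : set I) (F : I -> set T) :
  countable P -> (forall i, P i -> B (F i)) -> B (\bigcup_(i in P) F i).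
Proof.
move=> /countable_injP[f finj] bF.
pose E (n : nat) : set T :=
  match pselect (exists i, P i /\ f i = n) with
  | left h => F (projT1 (cid h))
  | right _ => set0 end.
rewrite (_ : \bigcup_(i in P) F i = \bigcup_n E n).
  apply: borel_bigcup => n; rewrite /E; case: pselect => [h|_]; last exact: borel0.
  by case: (cid h) => i [Pi _] /=; exact: bF.
apply/seteqP; split=> x.
  case=> i Pi Fx; exists (f i) => //; rewrite /E; case: pselect => [h|[]]; last by exists i.
  case: (cid h) => j [Pj fj] /=.
  by have -> : j = i by apply: finj; rewrite ?inE.
case=> n _; rewrite /E; case: pselect => [h|_ //].
by case: (cid h) => i [Pi _] /= Fx; exists i.
Qed.

Lemma borel_bigcap_countable (I : Type) (P : set I) (F : I -> set T) :
  countable P -> (forall i, P i -> B (F i)) -> B (\bigcap_(i in P) F i).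
Proof.
move=> cP bF; rewrite -[X in B X]setCK setC_bigcap; apply: borelC.
by apply: borel_bigcup_countable => // i Pi; apply: borelC; exact: bF.
Qed.

Lemma borel_preimage (T' : topologicalType) (f : T -> T') :
  continuous f -> forall V, borel_set V -> B (f @^-1` V).
Proof.
move=> cf V; apply: (@smallest_sub _ _ _ [set V | B (f @^-1` V)]).
  split => /=.
  - by rewrite preimage_set0; exact: borel0.
  - by move=> A bA; rewrite setTD preimage_setC; exact: borelC.
  - by move=> A bA; rewrite preimage_bigcup; exact: borel_bigcup.
by move=> U oU /=; apply: borel_open; move/continuousP: cf; apply.
Qed.

End Borel.

Section Q.
Variables (C : TopCat) (G : GroupFamily C) (A S : C).
Local Notation X := (hom A S).
Local Notation Q := (binom G S A).
Local Notation pi := (@cls C G A S).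

Lemma act_cont (a : hom A A) : continuous (fun x : X => comp x a).
Proof.
move=> x; apply: (continuous_comp (f := fun y : X => (y, a)) (g := fun p : X * hom A A => comp p.1 p.2)).
  by apply: cvg_pair => //; exact: cvg_cst.
exact: comp_continuous.
Qed.

Lemma cls_eq (x y : X) : pi x = pi y <-> exists2 a, G A a & x = comp y a.
Proof.
rewrite /cls; split.
  by move/eqmodP => /asboolP.
by move=> h; apply/eqmodP; apply/asboolP.
Qed.

Lemma cls_surj (q : Q) : exists x, pi x = q.
Proof. by exists (repr q); rewrite /cls reprK. Qed.

Lemma open_Q (V : set Q) : open (pi @^-1` V) -> open V.
Proof. by []. Qed.

Variables (m : nat) (d : 'I_m -> hom A A).
Hypothesis dG : forall j, G A (d j).
Hypothesis Gd : forall a, G A a -> exists j, d j = a.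

Lemma cls_eqd (x y : X) : pi x = pi y -> exists j, y = comp x (d j).
Proof. by move=> /esym/cls_eq[a /Gd[j <-] ->]; exists j. Qed.

Lemma cls_d (x : X) j : pi (comp x (d j)) = pi x.
Proof. by apply/cls_eq; exists (d j). Qed.

Lemma sat_pi (E : set X) :
  pi @^-1` (pi @` E) = \bigcup_(j in [set: 'I_m]) ((fun x => comp x (d j)) @^-1` E).
Proof.
apply/seteqP; split=> y.
  by case=> x Ex /esym/cls_eqd[j xE]; exists j => //=; rewrite -xE.
by case=> j _ /= Ey; exists (comp y (d j)) => //; exact: cls_d.
Qed.

Lemma open_pi (O : set X) : open O -> open (pi @` O).
Proof.
move=> oO; apply: open_Q; rewrite sat_pi; apply: bigcup_open => j _.
by move/continuousP: (act_cont (d j)); apply.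
Qed.

Hypothesis hX : hausdorff_space X.

Lemma open_moved j : open [set x : X | comp x (d j) <> x].
Proof.
rewrite openE => x /= /eqP nx.
move: hX; rewrite open_hausdorff => /(_ _ _ nx)[[O1 O2] /=]; rewrite !inE => -[O1x O2x] [oO1 oO2 O12].
rewrite /interior nbhsE /=.
exists (O2 `&` ((fun y : X => comp y (d j)) @^-1` O1)).
  rewrite /open_nbhs; split; last by [].
  apply: openI => //; by move/continuousP: (act_cont (d j)); apply.
move=> y [O2y O1y] /= yE.
have : (O1 `&` O2) y by split => //; rewrite -yE.
by rewrite O12.
Qed.

Lemma finite_closed (F : set X) : finite_set F -> closed F.
Proof.
by move=> fF; move: (hausdorff_accessible hX) => /accessible_finite_set_closed; apply.
Qed.

Definition PU (U : set X) : set X :=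
  U `&` [set x | forall j, U (comp x (d j)) -> comp x (d j) = x].

Definition WU (U : set X) : set X :=
  U `&` \bigcup_(j in [set: 'I_m]) ([set x | U (comp x (d j))] `&` [set x | comp x (d j) <> x]).

Lemma open_WU U : open U -> open (WU U).
Proof.
move=> oU; apply: openI => //; apply: bigcup_open => j _; apply: openI; last exact: open_moved.
by move/continuousP: (act_cont (d j)); apply.
Qed.

Lemma comp_dd (x : X) i j : exists k, comp (comp x (d i)) (d j) = comp x (d k).
Proof.
have [k dk] := Gd _ (grp_comp C G A _ _ (dG i) (dG j)).
by exists k; rewrite dk compA.
Qed.

Lemma pi_PU U : pi @` PU U = pi @` U `\` pi @` WU U.
Proof.
apply/seteqP; split=> q.
  case=> x [Ux Px] <-{q}; split; first by exists x.
  case=> y [Uy [j _ [/= Uyj nyj]]] /esym/cls_eqd[i yE].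
  have xE : comp x (d i) = x by apply: Px; rewrite -yE.
  have [k kE] := comp_dd x i j.
  apply: nyj; rewrite yE kE.
  have -> : comp x (d k) = x by apply: Px; rewrite -kE -yE.
  by rewrite xE.
case=> -[x Ux <-{q}] nW; exists x => //; split => // j Uxj.
apply: contrapT => nxj; apply: nW; exists x => //; split => //.
by exists j.
Qed.

Lemma pi_PU_inj U (y z : X) : PU U y -> PU U z -> pi y = pi z -> y = z.
Proof.
move=> [Uy Py] [Uz Pz] /cls_eqd[j zE].
by have := Py j; rewrite -zE => /(_ Uz) ->.
Qed.

Lemma pi_PU_open U (O : set X) : O `<=` U ->
  pi @` (O `&` PU U) = pi @` O `&` pi @` PU U.
Proof.
move=> OU; apply/seteqP; split=> q.
  by case=> x [Ox Px] <-; split; exists x.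
case=> -[o Oo <-] [p Pp /cls_eqd[j oE]].
have po : p = o.
  case: Pp => Up Pp; rewrite oE; symmetry; apply: Pp; rewrite -oE; exact: OU.
rewrite -po in Oo *; by exists p.
Qed.
Lemma basis_sub (Bs : set (set X)) : basis Bs ->
  forall (O : set X) x, open O -> O x -> exists U, [/\ Bs U, U x & U `<=` O].
Proof.
case=> Bo Bx O x oO Ox.
have := Bx x O (open_nbhs_nbhs (conj oO Ox)).
by case=> U [BU Ux] UO; exists U.
Qed.

Lemma cover_PU (Bs : set (set X)) : basis Bs -> forall x, exists U, Bs U /\ PU U x.
Proof.
move=> bas x.
pose Fin := [set comp x (d j) | j in [set j | comp x (d j) <> x]].
have cF : closed Fin by apply: finite_closed; apply: finite_image; exact: finite_finset.
have [U [BU Ux UO]] := @basis_sub Bs bas (~` Fin) x (closed_openC cF) (fun h => match h with ex_intro2 j nj xj => nj xj end).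
exists U; split => //; split => // j Uj.
apply: contrapT => nj; apply: (UO _ Uj); by exists j.
Qed.

Lemma quot_borel : @second_countable X ->
  forall V : set Q, borel_set (pi @^-1` V) -> borel_set V.
Proof.
case=> Bs cB bas V bE.
set E := pi @^-1` V in bE.
have -> : V = \bigcup_(U in Bs) pi @` (E `&` PU U).
  apply/seteqP; split=> q.
    move=> Vq; have [x xq] := cls_surj q.
    have [U [BU PUx]] := cover_PU Bs bas x.
    by exists U => //; exists x => //; split => //; rewrite /E /= xq.
  by case=> U _ [x [Ex _] <-].
apply: borel_bigcup_countable => // U BU.
have oU : open U by case: bas => Bo _; exact: Bo.
have bP : borel_set (pi @` PU U).
  rewrite pi_PU; apply: borelD; apply: borel_open; apply: open_pi => //.
  exact: open_WU.
move: E bE; apply: (@smallest_sub _ _ _ [set Y | borel_set (pi @` (Y `&` PU U))]).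
  split => /=.
  - by rewrite set0I image_set0; exact: borel0.
  - move=> Y bY; rewrite (_ : _ @` _ = pi @` PU U `\` pi @` (Y `&` PU U)).
      exact: borelD.
    apply/seteqP; split=> q.
      case=> x [[_ nY] Px] <-; split; first by exists x.
      case=> y [Yy Py] /(pi_PU_inj _ _ _ Py Px) yx; apply: nY; by rewrite -yx.
    case=> -[x Px <-] nq; exists x => //; split => //; split => // Yx.
    by apply: nq; exists x.
  - move=> F bF; rewrite setI_bigcupl image_bigcup; exact: borel_bigcup.
move=> O oO /=.
rewrite (_ : O `&` PU U = (O `&` U) `&` PU U); last first.
  apply/seteqP; split=> x; first by case=> Ox [Ux Px]; split => //; split.
  by case=> -[Ox _] Px.
rewrite pi_PU_open; last by apply: subIsetr.
apply: borelI => //; apply: borel_open; apply: open_pi; exact: openI.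
Qed.
End Q.

Lemma least_some (Q : nat -> Prop) (t : nat) : Q t ->
  exists n, [/\ least Q = Some n, (n <= t)%N & Q n].
Proof.
move=> Qt; rewrite /least; case: pselect => [h|[]]; last by exists t.
case: ex_minnP => n /asboolP Qn minn; exists n; split => //.
by apply: minn; apply/asboolP.
Qed.

Lemma least_Some (Q : nat -> Prop) n : least Q = Some n -> Q n.
Proof.
rewrite /least; case: pselect => [h|//] [<-].
by case: ex_minnP => m /asboolP.
Qed.

Lemma set_cardP T (Xs : set T) : finite_set Xs -> (Xs #= `I_(set_card Xs))%card.
Proof.
move=> [n hn]; rewrite /set_card.
by have [m [-> _ hm]] := least_some (fun m => (Xs #= `I_m)%card) n hn.
Qed.

Lemma enum_set T (Xs : set T) : finite_set Xs ->
  exists d : 'I_(set_card Xs) -> T,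
    [/\ injective d, forall j, Xs (d j) & forall a, Xs a -> exists j, d j = a].
Proof.
move=> /set_cardP /card_set_bijP[f [ff fi fs]].
have ex (j : 'I_(set_card Xs)) : exists2 a, Xs a & f a = val j.
  by apply: fs; rewrite /= ltn_ord.
pose d j := projT1 (cid2 (ex j)).
have dX j : Xs (d j) by rewrite /d; case: cid2.
have fd j : f (d j) = val j by rewrite /d; case: cid2.
exists d; split => //.
  by move=> i j dij; apply: val_inj; rewrite -!fd dij.
move=> a Xa; have fa : (f a < set_card Xs)%N by exact: (ff a Xa).
exists (Ordinal fa); apply: fi; rewrite ?inE // fd.
Qed.

Lemma fin_hom (C : TopCat) (inD : C -> Prop) : category_of_finite_objects inD ->
  forall A B : C, inD A -> inD B -> finite_set [set: hom A B].
Proof.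
move=> [_ [_ [_ fin]]] A B iA iB.
case: (pselect (exists f : hom A B, True)) => [[f0 _]|nf]; last first.
  rewrite (_ : [set: hom A B] = set0); first exact: finite_set0.
  by apply/seteqP; split => // f _; apply: nf; exists f.
pose g (p : {A0 : C & hom A0 B}) : hom A B :=
  match pselect (exists f : hom A B, p = existT _ A f) with
  | left h => projT1 (cid h) | right _ => f0 end.
apply: (@sub_finite_set _ _ (g @` [set p : {A0 : C & hom A0 B} | inD (projT1 p)])).
  move=> f _; exists (existT _ A f) => //.
  rewrite /g; case: pselect => [h|[]]; last by exists f.
  case: (cid h) => f' /= e.
  by apply: (Eqdep.EqdepTheory.inj_pair2 _ _ _ _ _ (esym e)).
exact: finite_image (fin B iB).
Qed.

Lemma hom_all_open (C : TopCat) (inD : C -> Prop) : category_of_finite_objects inD ->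
  (forall A B : C, hausdorff_space (hom A B)) ->
  forall A B : C, inD A -> inD B -> forall U : set (hom A B), open U.
Proof.
move=> cof haus A B iA iB U; rewrite -[U]setCK; apply: closed_openC.
move: (hausdorff_accessible (haus A B)) => /accessible_finite_set_closed; apply.
apply: (@sub_finite_set _ _ setT) => //; exact: (@fin_hom C inD cof A B iA iB).
Qed.

Set Implicit Arguments.
Unset Strict Implicit.
Section Main.
Variables (C : TopCat) (inD : C -> Prop) (S : C) (F : C -> C)
  (Phi : forall A : C, hom (F A) S -> {B : C & hom A B}) (G : GroupFamily C).
Hypotheses (mono : all_mono C) (haus : forall A B : C, hausdorff_space (hom A B))
  (cof : category_of_finite_objects inD) (univ : universal inD S)
  (appr : approximable inD S F Phi).
Variables (A : C) (inA : inD A).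
Local Notation A' := (F A).
Hypotheses (hA' : hausdorff_space (hom A' S)) (scA' : @second_countable (hom A' S)).
Variables (n : nat)
  (bigP : forall k, (2 <= k)%N -> forall chi : binom G S A' -> 'I_k,
        (forall i, borel_set (chi @^-1` [set i])) -> exists w : hom S S, (ncolors chi w <= n)%N).
Variables (dA : 'I_(set_card (G A)) -> hom A A) (dF : 'I_(set_card (G A')) -> hom A' A').
Hypotheses (dAi : injective dA) (dAG : forall j, G A (dA j)) (GdA : forall a, G A a -> exists j, dA j = a).
Hypotheses (dFG : forall j, G A' (dF j)) (GdF : forall a, G A' a -> exists j, dF j = a).
Local Notation g := (set_card (G A)).
Local Notation g' := (set_card (G A')).

Let inA' : inD A' := appr.1 A inA.

Lemma g_pos : (0 < g)%N.
Proof. by have [j _] := GdA (grp_id C G A); exact: (leq_ltn_trans (leq0n j) (ltn_ord j)). Qed.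

Lemma idx_ex (D : C) (phi : hom A D) : exists j, phi = comp (repr (cls G phi)) (dA j).
Proof.
have : cls G phi = cls G (repr (cls G phi)) by rewrite /cls reprK.
move/cls_eq => [a Ga e]; have [j ej] := GdA Ga; by exists j; rewrite ej.
Qed.

Definition idx (D : C) (phi : hom A D) : 'I_g := projT1 (cid (idx_ex phi)).

Lemma idxP D (phi : hom A D) : phi = comp (repr (cls G phi)) (dA (idx phi)).
Proof. by rewrite /idx; case: cid. Qed.

Lemma idx_uniq D (phi : hom A D) j : phi = comp (repr (cls G phi)) (dA j) -> idx phi = j.
Proof.
move=> e; apply: dAi; apply: (mono (f := repr (cls G phi))).
by rewrite -idxP -e.
Qed.

Section Col.
Variables (k : nat) (chi : forall D : C, binom G D A -> 'I_k).
Local Notation CT := ('I_k * 'I_g)%type.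
Definition col (D : C) (phi : hom A D) : CT := (chi (cls G phi), idx phi).
Definition cu (u : hom A' S) : CT := col (projT2 (@Phi A u)).
Definition Xset (u : hom A' S) : {set CT} := [set cu (comp u (dF j)) | j : 'I_g'].
Definition KK := #|{set CT}|.+2.
Definition enc (s : {set CT}) : 'I_KK := widen_ord (leqW (leqnSn _)) (enum_rank s).
Lemma enc_inj : injective enc.
Proof.
move=> s1 s2 /(congr1 val) /= e; apply: enum_rank_inj; exact: val_inj.
Qed.
Definition Chi (q : binom G S A') : 'I_KK := enc (Xset (repr q)).

Lemma XsetG u a : G A' a -> Xset (comp u a) = Xset u.
Proof.
move=> Ga; apply/setP => x; apply/imsetP/imsetP => -[j _ ->].
  have [j' ej'] := GdF (grp_comp C G A' _ _ Ga (dFG j)).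
  by exists j' => //; rewrite ej' compA.
have [b Gb [ab ba]] := grp_inv C G A' a Ga.
have [j' ej'] := GdF (grp_comp C G A' _ _ Gb (dFG j)).
by exists j' => //; rewrite ej' -compA (compA a b) ab comp1m.
Qed.

Lemma ChiE u : Chi (cls G u) = enc (Xset u).
Proof.
rewrite /Chi.
have : cls G (repr (cls G u)) = cls G u by rewrite /cls reprK.
by move/cls_eq => [a Ga ->]; rewrite XsetG.
Qed.

Lemma cu_borel x : borel_set [set u : hom A' S | cu u = x].
Proof.
rewrite (_ : [set u | cu u = x] = \bigcup_(D in inD)
   [set u | exists2 phi, [set phi : hom A D | col phi = x] phi & @Phi A u = existT _ D phi]).
  apply: borel_bigcup_countable; first by case: cof => _ [_ [? _]].
  move=> D iD; apply: (appr.2.2.1 A D inA iD).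
  exact: (@hom_all_open C inD cof haus A D inA iD).
apply/seteqP; split=> u /=.
  move=> cux; exists (projT1 (@Phi A u)); first exact: (appr.2.1 A u inA).
  by exists (projT2 (@Phi A u)) => //; case: (@Phi A u).
by case=> D _ [phi /= colx e]; rewrite /cu e.
Qed.

Lemma Chi_borel i : borel_set (Chi @^-1` [set i]).
Proof.
apply: (quot_borel C G A' S (set_card (G A')) dF dFG GdF hA' scA').
pose Ex x := \bigcup_(j in [set: 'I_g']) ((fun u : hom A' S => comp u (dF j)) @^-1` [set u | cu u = x]).
have bEx x : borel_set (Ex x).
  apply: borel_bigcup_countable => // j _; apply: borel_preimage; first exact: act_cont.
  exact: cu_borel.
rewrite (_ : _ @^-1` _ = \bigcup_(s in [set s | enc s = i]) [set u | Xset u = s]).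
  apply: borel_bigcup_countable => // s _.
  rewrite (_ : [set u | Xset u = s] = \bigcap_(x in [set: CT]) (if x \in s then Ex x else ~` Ex x)).
    apply: borel_bigcap_countable => // x _.
    by case: ifP => _; [exact: bEx | apply: borelC; exact: bEx].
  apply/seteqP; split => u /=.
    move=> <- x _; case: ifP.
      by move/imsetP => [j _ ->]; exists j.
    move=> /negbT nx [j _ /= e]; move/negP: nx; apply.
    by apply/imsetP; exists j => //; rewrite e.
  move=> h; apply/setP => x; have := h x Logic.I; case: ifP => xs.
    by case=> j _ /= e; apply/imsetP; exists j => //; rewrite e.
  move=> nE; apply/negbTE/negP; case/imsetP => j _ e; apply: nE; exists j => //=.
apply/seteqP; split => u /=; rewrite ChiE.
  by move=> <-; exists (Xset u).
by case=> s /= es xs; rewrite xs.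
Qed.

Lemma count_bound (B : C) (inB : inD B) (w : hom S S) :
  (ncolors Chi w <= n)%N ->
  exists D : C, inD D /\ exists h : hom B D, (ncolors (chi (D := D)) h * g <= n * g')%N.
Proof.
move=> hw.
have inFB := appr.1 B inB.
case: (univ inFB) => v.
case: (univ inA') => ud.
pose u0 := comp w v.
pose D0 := projT1 (@Phi B u0).
pose h : hom B D0 := projT2 (@Phi B u0).
exists D0; split; first exact: (appr.2.1 B u0 inB).
exists h.
pose I := [set i : 'I_k | `[< exists f : hom A B, chi (cls G (comp h f)) = i >]]%SET.
rewrite /ncolors -/I.
pose Pset := [set x : CT | `[< exists f : hom A B, col (comp h f) = x >]]%SET.
have h1 : (#|I| * g <= #|Pset|)%N.
  rewrite -{1}[g]card_ord -(cardsT 'I_g) -(cardsX I [set: 'I_g]%SET); apply: subset_leq_card.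
  apply/fintype.subsetP => -[i j]; rewrite !inE /= andbT => /asboolP[f0 e0]; apply/asboolP.
  have ej0 := idxP (comp h f0).
  move: (idx (comp h f0)) ej0 => i0 ej0.
  have eqr : repr (cls G (comp h f0)) = repr (cls G (comp h f0)) by [].
  move: {2 3}(repr (cls G (comp h f0))) eqr ej0 => r eqr ej0.
  have [b Gb [ab ba]] := grp_inv C G A (dA i0) (dAG i0).
  apply/asboolP; exists (comp f0 (comp b (dA j))).
  have hf : comp h (comp f0 (comp b (dA j))) = comp r (dA j).
    by rewrite compA ej0 -compA (compA (dA i0) b) ab comp1m.
  have cls_hf : cls G (comp h (comp f0 (comp b (dA j)))) = cls G (comp h f0).
    rewrite hf; transitivity (cls G r).
      by apply/cls_eq; exists (dA j).
    by rewrite -eqr /cls reprK.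
  rewrite /col cls_hf e0; congr pair; apply: idx_uniq.
  by rewrite cls_hf hf eqr.
pose Sset := [set s : {set CT} | `[< exists f : hom A' S, Xset (comp w f) = s >]]%SET.
pose us (s : {set CT}) : hom A' S :=
  match pselect (exists f, Xset (comp w f) = s) with
  | left hh => projT1 (cid hh) | right _ => ud end.
have usP s : s \in Sset -> Xset (comp w (us s)) = s.
  rewrite inE => /asboolP hs; rewrite /us; case: pselect => [hh|//].
  by case: (cid hh).
pose Fp (p : {set CT} * 'I_g') := cu (comp (comp w (us p.1)) (dF p.2)).
have h2 : (#|Pset| <= #|Sset| * g')%N.
  have sub : Pset \subset Fp @: (finset.setX Sset [set: 'I_g']%SET).
    apply/fintype.subsetP => x; rewrite inE => /asboolP[f e].
    have [f' ef'] := appr.2.2.2 A B f u0 inA inB.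
    have cx : cu (comp w (comp v f')) = x.
      by rewrite /cu compA -/u0 ef' /=.
    pose s := Xset (comp w (comp v f')).
    have sS : s \in Sset by rewrite inE; apply/asboolP; exists (comp v f').
    have : x \in s.
      rewrite -cx; apply/imsetP; have [j0 ej0] := GdF (grp_id C G A').
      by exists j0 => //; rewrite ej0 compm1.
    rewrite -(usP s sS) => /imsetP[j _ xj].
    by apply/imsetP; exists (s, j) => //; rewrite finset.in_setX sS finset.in_setT.
  apply: leq_trans (subset_leq_card sub) _.
  apply: leq_trans (leq_imset_card _ _) _.
  by rewrite cardsX cardsT card_ord.
have h3 : (#|Sset| <= n)%N.
  apply: leq_trans hw; rewrite /ncolors -(card_imset _ enc_inj).
  apply: subset_leq_card; apply/fintype.subsetP => _ /imsetP[s sS ->].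
  rewrite inE; apply/asboolP; move: sS; rewrite inE => /asboolP[f <-].
  by exists f; rewrite ChiE.
apply: leq_trans h1 _; apply: leq_trans h2 _.
by rewrite leq_mul2r h3 orbT.
Qed.

End Col.

Definition t := ((n * g') %/ g)%N.

Lemma small_prop : forall k (B : C), inD B -> exists2 D : C, inD D &
  forall chi : binom G D A -> 'I_k, exists w : hom B D, (ncolors chi w <= t)%N.
Proof.
move=> k B inB.
case: k => [|k].
  exists B => // chi; exists (idm B).
  apply: leq_trans (max_card _) _; by rewrite card_ord.
apply: contrapT => nD.
have bad (D : C) : exists chi : binom G D A -> 'I_k.+1,
    inD D -> forall w : hom B D, (t < ncolors chi w)%N.
  case: (pselect (inD D)) => [iD|niD]; last by exists (fun _ => ord0).
  apply: contrapT => /forallNP hn; apply: nD; exists D => // chi.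
  have /not_implyP[_ /existsNP[w hw]] := hn chi.
  by exists w; rewrite leqNgt; apply/negP.
pose chi (D : C) := projT1 (cid (bad D)).
have chiP (D : C) : inD D -> forall w : hom B D, (t < ncolors (chi D) w)%N.
  by rewrite /chi; case: cid.
have [w hw] := bigP (k := KK k.+1) (erefl _) (@Chi_borel k.+1 chi).
have [D [iD [h hh]]] := count_bound inB hw.
have ltc := chiP D iD h.
have lt1 := ltn_ceil (n * g') g_pos.
have := leq_trans (leq_mul ltc (leqnn g)) hh.
by rewrite leqNgt -/t lt1.
Qed.

Lemma small_le : (small_ramsey_deg inD G A <=
   ((set_card (G A'))%:R / (set_card (G A))%:R)%:E * ((n%:R : rat)%:E))%E.
Proof.
have tpos : (0 < t)%N.
  have [D iD hD] := small_prop 1 inA.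
  have [w hw] := hD (fun _ => ord0).
  apply: leq_trans hw; rewrite card_gt0; apply/set0Pn; exists ord0.
  by rewrite inE; apply/asboolP; exists (idm A).
have [m [Em mt _]] := least_some (fun m => (0 < m)%N /\ forall (k : nat) (B : C), inD B ->
      exists2 D : C, inD D &
        forall chi : binom G D A -> 'I_k,
          exists w : hom B D, (ncolors chi w <= m)%N) t (conj tpos small_prop).
rewrite /small_ramsey_deg Em /= -EFinM lee_fin.
have gpos : (0 < (g%:R : rat))%R by rewrite Num.Theory.ltr0n g_pos.
rewrite GRing.mulrAC Num.Theory.ler_pdivlMr // -!GRing.natrM Num.Theory.ler_nat.
apply: leq_trans (leq_mul mt (leqnn g)) _.
by rewrite [(g' * n)%N]mulnC; exact: leq_divM.
Qed.

End Main.

Unset Implicit Arguments.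
Set Strict Implicit.

Theorem corollary5p6 (C : TopCat) (inD : C -> Prop) (S : C) (F : C -> C)
    (Phi : forall A : C, hom (F A) S -> {B : C & hom A B})
    (G : GroupFamily C) :
  all_mono C ->
  (forall A B : C, hausdorff_space (hom A B)) ->
  skeletal inD ->
  category_of_finite_objects inD ->
  universal inD S ->
  approximable inD S F Phi ->
  (forall A : C, inD A ->
     locally_compact [set: hom A S] /\ @second_countable (hom A S) /\
     hausdorff_space (hom A S)) ->
  (forall A : C, inD A ->
     finite_set (G A) /\ finite_set (G (F A)) /\
     (small_ramsey_deg inD G A <=
        ((set_card (G (F A)))%:R / (set_card (G A))%:R)%:E
          * big_ramsey_deg G (F A) S)%E) /\
  ((forall A : C, inD A -> (big_ramsey_deg G A S < +oo)%E) ->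
   forall A : C, inD A -> (small_ramsey_deg inD G A < +oo)%E).
Proof.
move=> mono haus skel cof univ appr top.
have finG : forall B, inD B -> finite_set (G B).
  move=> B iB; apply: (@sub_finite_set _ _ setT) => //.
  exact: (@fin_hom C inD cof B B iB iB).
have main : forall A : C, inD A ->
     finite_set (G A) /\ finite_set (G (F A)) /\
     (small_ramsey_deg inD G A <=
        ((set_card (G (F A)))%:R / (set_card (G A))%:R)%:E
          * big_ramsey_deg G (F A) S)%E.
  move=> A inA.
  have inA' := appr.1 A inA.
  split; first exact: finG.
  split; first exact: finG.
  have [dA [dAi dAG GdA]] := enum_set _ _ (finG A inA).
  have [dF [dFi dFG GdF]] := enum_set _ _ (finG _ inA').
  have [_ [sc hs]] := top _ inA'.
  have gpos : (0 < set_card (G A))%N.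
    by have [j _] := GdA _ (grp_id C G A); exact: (leq_ltn_trans (leq0n j) (ltn_ord j)).
  have gpos' : (0 < set_card (G (F A)))%N.
    by have [j _] := GdF _ (grp_id C G (F A)); exact: (leq_ltn_trans (leq0n j) (ltn_ord j)).
  rewrite /big_ramsey_deg.
  case E: (least _) => [n|] /=.
    have [n0 bigP] := least_Some _ _ E.
    exact: (small_le mono haus cof univ appr inA hs sc bigP dAi dAG GdA dFG GdF).
  rewrite mulry Num.Theory.gtr0_sg ?mul1e ?leey //.
  by apply: Num.Theory.divr_gt0; rewrite Num.Theory.ltr0n.
split => // hfin A inA.
have [_ [_ le]] := main A inA.
have := hfin _ (appr.1 A inA).
move: le; rewrite /big_ramsey_deg; case: (least _) => [x|] /= le h.
  by apply: Order.POrderTheory.le_lt_trans le _; rewrite -EFinM; exact: ltry.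
by move: h; rewrite Order.POrderTheory.ltxx.
Qed.
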